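(* Let $g,h>\tfrac12$ and let $\mathcal{D}=((d_1,t_1),\ldots,(d_M,t_M))$ be an ordered list of pairwise distinct seed labels, valid both for the parameters $(g,h)$ and $(h,g)$, which is mirror symmetric, i.e. $\{d_j: t_j=\mathrm{I}\}=\{d_j: t_j=\mathrm{II}\}$ as sets. Then for every $n\in\mathbb{Z}_{\ge0}$ and $-1<\eta<1$, $$P_{\mathcal{D},n}\big(-\eta;(g,h)\big)=(-1)^nP_{\mathcal{D},n}\big(\eta;(h,g)\big),\qquad \Xi_{\mathcal{D}}\big(-\eta;(g,h)\big)=\Xi_{\mathcal{D}}\big(\eta;(h,g)\big).$$
   Context: $[a]'$ denotes the greatest integer strictly less than $a$; $(a)_k=a(a+1)\cdots(a+k-1)$, $(a)_0=1$. For real $\alpha,\beta$, $m\in\mathbb{Z}_{\ge0}$, $P^{(\alpha,\beta)}_m(\eta)=\frac{1}{m!}\sum_{k=0}^m\frac{(-m)_k(m+\alpha+\beta+1)_k(\alpha+k+1)_{m-k}}{k!}\big(\frac{1-\eta}{2}\big)^k$. For parameters $(g,h)$, a seed label is a pair $(\mathrm{v},t)$, $t\in\{\mathrm{I},\mathrm{II}\}$, with $\mathrm{v}\in\{0,\ldots,[h-\frac12]'\}$ if $t=\mathrm{I}$ and $\mathrm{v}\in\{0,\ldots,[g-\frac12]'\}$ if $t=\mathrm{II}$. For $-1<\eta<1$ let $\mu_{(\mathrm{v},\mathrm{I})}(\eta;(g,h))=\big(\frac{1+\eta}{2}\big)^{\frac12-h}P^{(g-\frac12,\frac12-h)}_{\mathrm{v}}(\eta)$,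 $\mu_{(\mathrm{v},\mathrm{II})}(\eta;(g,h))=\big(\frac{1-\eta}{2}\big)^{\frac12-g}P^{(\frac12-g,h-\frac12)}_{\mathrm{v}}(\eta)$, $P_n(\eta;(g,h))=P^{(g-\frac12,h-\frac12)}_n(\eta)$, and $\mathrm{W}[f_1,\ldots,f_r](\eta)=\det\big(\frac{d^{j-1}f_k}{d\eta^{j-1}}\big)_{1\le j,k\le r}$. For an ordered list $\mathcal{D}$ of seed labels with $M_{\mathrm{I}}$ of Type I and $M_{\mathrm{II}}$ of Type II, $\Xi_{\mathcal{D}}(\eta;(g,h))=\mathrm{W}[\mu_{(d_1,t_1)},\ldots,\mu_{(d_M,t_M)}](\eta)\big(\frac{1-\eta}{2}\big)^{(M_{\mathrm{I}}+g-\frac12)M_{\mathrm{II}}}\big(\frac{1+\eta}{2}\big)^{(M_{\mathrm{II}}+h-\frac12)M_{\mathrm{I}}}$ and $P_{\mathcal{D},n}(\eta;(g,h))=\mathrm{W}[\mu_{(d_1,t_1)},\ldots,\mu_{(d_M,t_M)},P_n](\eta)\big(\frac{1-\eta}{2}\big)^{(M_{\mathrm{I}}+g+\frac12)M_{\mathrm{II}}}\big(\frac{1+\eta}{2}\big)^{(M_{\mathrm{II}}+h+\frac12)M_{\mathrm{I}}}$, with all $\mu$'s and $P_n$ at parameters $(g,h)$; these are polynomials in $\eta$. *)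

(* Defs.v *)
From HB Require Import structures.
From mathcomp Require Import all_boot all_order all_algebra.
From mathcomp Require Import all_classical all_reals all_analysis.
Set Implicit Arguments. Unset Strict Implicit. Unset Printing Implicit Defensive.
Import Order.TTheory GRing.Theory Num.Theory.
Local Open Scope ring_scope.

Section Defs.
Variable R : realType.

Definition poch (a : R) (k : nat) : R := \prod_(i < k) (a + i%:R).

Definition jacobiP (al be : R) (m : nat) (eta : R) : R :=
  (m`!%:R)^-1 * \sum_(k < m.+1)
     (poch (- m%:R) k * poch (m%:R + al + be + 1) k * poch (al + k%:R + 1) (m - k)
        / (k`!%:R)) * ((1 - eta) / 2) ^+ k.

Inductive seed_type := TypeI | TypeII.
Definition seed_type_eqb (a b : seed_type) : bool :=
  match a, b with TypeI, TypeI | TypeII, TypeII => true | _, _ => false end.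
Lemma seed_type_eqP : Equality.axiom seed_type_eqb.
Proof. by case; case; constructor. Qed.
HB.instance Definition _ := hasDecEq.Build seed_type seed_type_eqP.

Definition seed_label := (nat * seed_type)%type.

(* v in {0, ..., [a]'} where [a]' is the greatest integer strictly less than a;
   for a natural v this is exactly v < a *)
Definition in_range_strict (v : nat) (a : R) : Prop := v%:R < a.

Definition valid_seed (g h : R) (d : seed_label) : Prop :=
  match d.2 with
  | TypeI => in_range_strict d.1 (h - 2^-1)
  | TypeII => in_range_strict d.1 (g - 2^-1)
  end.

Definition mu (g h : R) (d : seed_label) (eta : R) : R :=
  match d.2 with
  | TypeI => powR ((1 + eta) / 2) (2^-1 - h) * jacobiP (g - 2^-1) (2^-1 - h) d.1 eta
  | TypeII => powR ((1 - eta) / 2) (2^-1 - g) * jacobiP (2^-1 - g) (h - 2^-1) d.1 eta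
  end.

Definition Pn (g h : R) (n : nat) (eta : R) : R := jacobiP (g - 2^-1) (h - 2^-1) n eta.

Definition wronskian (r : nat) (f : 'I_r -> R -> R) (eta : R) : R :=
  \det (\matrix_(j < r, k < r) (derive1n j (f k)) eta).

Definition M_I (D : seq seed_label) : nat := count (fun d => d.2 == TypeI) D.
Definition M_II (D : seq seed_label) : nat := count (fun d => d.2 == TypeII) D.

Definition Xi (D : seq seed_label) (g h : R) (eta : R) : R :=
  wronskian (fun k : 'I_(size D) => mu g h (nth (0%N, TypeI) D k)) eta
  * powR ((1 - eta) / 2) (((M_I D)%:R + g - 2^-1) * (M_II D)%:R)
  * powR ((1 + eta) / 2) (((M_II D)%:R + h - 2^-1) * (M_I D)%:R).

Definition PD (D : seq seed_label) (n : nat) (g h : R) (eta : R) : R :=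
  wronskian (fun k : 'I_(size D).+1 =>
               if (k < size D)%N then mu g h (nth (0%N, TypeI) D k) else Pn g h n) eta
  * powR ((1 - eta) / 2) (((M_I D)%:R + g + 2^-1) * (M_II D)%:R)
  * powR ((1 + eta) / 2) (((M_II D)%:R + h + 2^-1) * (M_I D)%:R).

End Defs.

(* Main.v *)
Require Import Defs.
From HB Require Import structures.
From mathcomp Require Import all_boot all_order all_algebra.
From mathcomp Require Import all_classical all_reals all_analysis.
From mathcomp Require Import ring.
From mathcomp Require Import fingroup perm.
Import Order.TTheory GRing.Theory Num.Theory.
Local Open Scope ring_scope.
Section Jac.
Variable R : realType.
Implicit Types (a b A C w y x : R).

Lemma poch0 a : poch a 0 = 1.
Proof. by rewrite /poch big_ord0. Qed.

Lemma pochS a k : poch a k.+1 = poch a k * (a + k%:R).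
Proof. by rewrite /poch big_ord_recr. Qed.

Lemma pochSl a k : poch a k.+1 = a * poch (a + 1) k.
Proof.
rewrite /poch big_ord_recl addr0; congr (_ * _); apply: eq_bigr => i _.
by rewrite lift0 -natr1 addrA (addrAC a).
Qed.

Lemma poch_add a j i : poch a (j + i)%N = poch a j * poch (a + j%:R) i.
Proof.
elim: i => [|i IH]; first by rewrite addn0 poch0 mulr1.
by rewrite addnS !pochS IH natrD -mulrA addrA.
Qed.

Lemma poch_flip w L : poch (w - L%:R + 1) L = (-1)^+L * poch (- w) L.
Proof.
elim: L w => [|L IH] w; first by rewrite !poch0 expr0 mulr1.
rewrite pochSl pochS.
have -> : w - L.+1%:R + 1 + 1 = w - L%:R + 1 by rewrite -natr1; ring.
rewrite IH exprS -natr1; ring.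
Qed.

Lemma poch_negnat m k : poch (- m%:R : R) k = (-1)^+k * (m ^_ k)%:R.
Proof.
elim: k => [|k IH]; first by rewrite poch0 ffactn0 expr0 mulr1.
rewrite pochS IH ffactnSr natrM exprS.
case: (leqP k m) => hk.
  rewrite natrB //; ring.
by rewrite ffact_small // !(mul0r, mulr0).
Qed.

Definition Tp N A C y := \sum_(k < N.+1)
  ('C(N,k)%:R * (-1)^+k * poch C k * poch (A + k%:R) (N - k)) * y ^+ k.
Definition Sp L A C := \sum_(i < L.+1)
  'C(L,i)%:R * (-1)^+i * poch C i * poch (A + i%:R) (L - i).

Lemma Sp_eq L A C : Sp L A C = poch (A - C) L.
Proof.
elim: L A C => [|L IH] A C.
  by rewrite /Sp big_ord1 /= subnn !poch0 bin0 expr0 !mulr1.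
have E1 : \sum_(i < L.+2) 'C(L, i)%:R * (-1)^+i * poch C i * poch (A + i%:R) (L.+1 - i)
    = (A + L%:R) * Sp L A C.
  rewrite big_ord_recr /= bin_small // !mul0r addr0 /Sp mulr_sumr; apply: eq_bigr => i _.
  have hi : (i <= L)%N by rewrite -ltnS.
  rewrite subSn // pochS.
  have -> : A + i%:R + (L - i)%:R = A + L%:R by rewrite -addrA -natrD subnKC.
  ring.
have E2 : \sum_(i < L.+1) 'C(L, i)%:R * (-1)^+i.+1 * poch C i.+1
     * poch (A + i.+1%:R) (L.+1 - i.+1) = - C * Sp L (A + 1) (C + 1).
  rewrite /Sp mulr_sumr; apply: eq_bigr => i _.
  rewrite subSS pochSl exprS.
  have -> : A + i.+1%:R = A + 1 + i%:R by rewrite -natr1; ring.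
  ring.
have E0 : Sp L.+1 A C =
   \sum_(i < L.+2) 'C(L, i)%:R * (-1)^+i * poch C i * poch (A + i%:R) (L.+1 - i)
 + \sum_(i < L.+1) 'C(L, i)%:R * (-1)^+i.+1 * poch C i.+1
     * poch (A + i.+1%:R) (L.+1 - i.+1).
  rewrite /Sp big_ord_recl [X in _ = X + _]big_ord_recl -addrA /=; congr (_ + _).
    by rewrite !bin0.
  rewrite -big_split; apply: eq_bigr => i _.
  by rewrite (_ : bump 0 i = i.+1) // binS natrD !mulrDl.
rewrite E0 E1 E2 !IH.
have -> : A + 1 - (C + 1) = A - C by ring.
rewrite pochS; ring.
Qed.


Lemma binmul N j i : (j + i <= N)%N ->
  ('C(N, j + i) * 'C(j + i, j) = 'C(N, j) * 'C(N - j, i))%N.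
Proof.
move=> h.
have hj : (j <= N)%N by apply: leq_trans h; apply: leq_addr.
have hi : (i <= N - j)%N by rewrite leq_subRL.
have h1 := bin_fact h.
have h2 := bin_fact (leq_addr i j); rewrite addKn in h2.
have h3 := bin_fact hi.
have h4 := bin_fact hj.
rewrite subnDA in h1.
have pos : (0 < j`! * i`! * (N - j - i)`!)%N by rewrite !muln_gt0 !fact_gt0.
apply/eqP; rewrite -(eqn_pmul2r pos); apply/eqP.
have -> : ('C(N, j + i) * 'C(j + i, j) * (j`! * i`! * (N - j - i)`!) =
   'C(N, j + i) * ('C(j + i, j) * (j`! * i`!)) * (N - j - i)`!)%N by ring.
rewrite h2.
have -> : ('C(N, j) * 'C(N - j, i) * (j`! * i`! * (N - j - i)`!) =
   'C(N, j) * j`! * ('C(N - j, i) * (i`! * (N - j - i)`!)))%N by ring.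
by rewrite h3 -[LHS]mulnA h1 -[RHS]mulnA h4.
Qed.

Lemma expand1 y k N : (k <= N)%N ->
  (1 - y) ^+ k = \sum_(j < N.+1) 'C(k, j)%:R * (- y) ^+ j.
Proof.
move=> kN; rewrite exprDn (big_ord_widen N.+1 (fun j => 1 ^+ (k - j) * (- y) ^+ j *+ 'C(k, j))) //.
rewrite big_mkcond; apply: eq_bigr => j _.
case: ifP => hj; first by rewrite expr1n mul1r mulr_natl.
by rewrite bin_small ?mul0r // ltnNge -ltnS hj.
Qed.

Lemma sum_shift (F : nat -> R) j N : (j <= N)%N -> (forall k, (k < j)%N -> F k = 0) ->
  \sum_(k < N.+1) F k = \sum_(i < (N - j).+1) F (j + i)%N.
Proof.
move=> jN F0.
rewrite -!(big_mkord xpredT) (big_cat_nat (n:=j)) //=; last exact: leqW.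
rewrite big1_seq ?add0r; last first.
  by move=> k /andP[_]; rewrite mem_index_iota => /andP[_ /F0].
rewrite -{1}[j]add0n big_addn subSn // big_mkord; apply: eq_bigr => i _; by rewrite addnC.
Qed.


Lemma CE A C N j : (j <= N)%N ->
  \sum_(k < N.+1) 'C(N,k)%:R * (-1)^+k * poch C k * poch (A + k%:R) (N - k) * 'C(k,j)%:R
  = 'C(N,j)%:R * (-1)^+N * poch C j * poch (C - A - N%:R + 1 + j%:R) (N - j).
Proof.
move=> jN.
rewrite (sum_shift (fun k => 'C(N,k)%:R * (-1)^+k * poch C k * poch (A + k%:R) (N - k) * 'C(k,j)%:R) _ _ jN); last by move=> k kj /=; rewrite (bin_small kj) mulr0.
rewrite (eq_bigr (fun i : 'I_(N - j).+1 => ('C(N,j)%:R * (-1)^+j * poch C j) *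
   ('C(N-j,i)%:R * (-1)^+i * poch (C + j%:R) i * poch (A + j%:R + i%:R) (N - j - i)))); last first.
  move=> i _.
  have hi : (j + i <= N)%N.
    have := ltn_ord i; rewrite ltnS => h; by rewrite -leq_subRL.
  have := @binmul _ _ _ hi; move/(congr1 (fun n => n%:R : R)); rewrite !natrM => hb.
  rewrite exprD poch_add subnDA natrD addrA.
  rewrite [LHS]mulrC !mulrA (mulrC 'C(j + i, j)%:R) hb; ring.
rewrite -mulr_sumr.
rewrite [X in _ * X = _](_ : _ = Sp (N - j) (A + j%:R) (C + j%:R)) // Sp_eq.
have -> : A + j%:R - (C + j%:R) = A - C by ring.
have -> : C - A - N%:R + 1 + j%:R = (C - A) - (N - j)%:R + 1 by rewrite natrB //; ring.
rewrite poch_flip opprB.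
rewrite (_ : (-1)^+N = (-1)^+j * (-1)^+(N-j) :> R); last by rewrite -exprD subnKC.
have s2 : (-1)^+(N-j) * (-1)^+(N-j) = 1 :> R by rewrite -expr2 sqrr_sign.
rewrite -[LHS]mulr1 -[X in _ * X = _]s2; ring.
Qed.

Lemma Tsym N A C y : Tp N A C (1 - y) = (-1)^+N * Tp N (C - A - N%:R + 1) C y.
Proof.
rewrite /Tp.
have -> : \sum_(k < N.+1) ('C(N,k)%:R * (-1)^+k * poch C k * poch (A + k%:R) (N - k)) * (1 - y) ^+ k
   = \sum_(k < N.+1) \sum_(j < N.+1) ('C(N,k)%:R * (-1)^+k * poch C k * poch (A + k%:R) (N - k) * 'C(k,j)%:R) * (- y) ^+ j.
  apply: eq_bigr => k _; have kN : (k <= N)%N by rewrite -ltnS.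
  rewrite (expand1 _ _ _ kN).
  rewrite mulr_sumr; apply: eq_bigr => j _; by rewrite mulrA.
rewrite exchange_big mulr_sumr; apply: eq_bigr => j _.
rewrite -mulr_suml CE; last by rewrite -ltnS.
rewrite (exprNn y); ring.
Qed.

Lemma jacobi_T a b m x : jacobiP a b m x =
  (m`!%:R)^-1 * Tp m (a + 1) (m%:R + a + b + 1) ((1 - x) / 2).
Proof.
rewrite /jacobiP /Tp; congr (_ * _); apply: eq_bigr => k _.
rewrite poch_negnat -bin_ffact natrM.
have -> : a + k%:R + 1 = a + 1 + k%:R by ring.
have hk : (k`!%:R : R) != 0 by rewrite pnatr_eq0 -lt0n fact_gt0.
by field.
Qed.

Lemma jacobi_sym a b m x : jacobiP a b m (- x) = (-1)^+m * jacobiP b a m x.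
Proof.
rewrite !jacobi_T.
have -> : (1 - - x) / 2 = 1 - (1 - x) / 2 :> R.
  have h2 : (2 : R) != 0 by rewrite pnatr_eq0.
  by field.
rewrite Tsym.
have -> : m%:R + a + b + 1 - (a + 1) - m%:R + 1 = b + 1 by ring.
have -> : m%:R + a + b + 1 = m%:R + b + a + 1 by ring.
by rewrite mulrCA.
Qed.

End Jac.

Local Open Scope classical_set_scope.
Section Der.
Variable R : realType.
Lemma limN_any (q : R -> (R : normedModType R)) :
  lim ((fun h => - q h) @ 0^') = - lim (q @ 0^').
Proof.
have [cf|ncf] := pselect (cvg (q @ 0^')).
  by rewrite limN.
rewrite (dvgP ncf) dvgP.
  exact/esym/oppr0.
move=> cg; apply: ncf.
have -> : q = - (fun h => - q h) by apply/funext => x /=; rewrite opprK.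
exact: (cvgP _ (cvgN cg)).
Qed.

Lemma derive1_opp (f : R -> R) : derive1 (fun x => - f x) = fun x => - derive1 f x.
Proof.
apply/funext => a; rewrite /derive1.
have -> : (fun h : R => h^-1 *: (- f (h + a) - - f a)) = (fun h => - (h^-1 *: (f (h + a) - f a))).
  by apply/funext => h; rewrite -scalerN opprB opprK addrC.
exact: limN_any.
Qed.

Lemma dnbhs0N : ((fun x : R => - x) @ 0^') = 0^'.
Proof.
apply/seteqP; split => A /=.
  move=> /nbhs_ballP [e e0 H]; apply/nbhs_ballP; exists e => // y By y0.
  have := H (- y); rewrite /= opprK; apply; last by rewrite oppr_eq0.
  by move: By; rewrite -!ball_normE /= !sub0r !normrN.
move=> /nbhs_ballP [e e0 H]; apply/nbhs_ballP; exists e => // y By y0.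
apply: H; last by rewrite oppr_eq0.
by move: By; rewrite -!ball_normE /= !sub0r !normrN.
Qed.
Lemma derive1_neg (f : R -> R) : derive1 (fun x => f (- x)) = fun x => - derive1 f (- x).
Proof.
apply/funext => a; rewrite /derive1.
rewrite -limN_any.
set q := (fun h : R => h^-1 *: (f (h + - a) - f (- a))).
rewrite (_ : (fun h => _) = (fun h => - q (- h))); last first.
  apply/funext => h; rewrite /q invrN scaleNr opprK opprD //.
rewrite (_ : ((fun h => - q (- h)) @ 0^') = ((fun h => - q h) @ ((fun x : R => - x) @ 0^'))) //.
by rewrite dnbhs0N.
Qed.

Lemma derive1n_opp j (F : R -> R) :
  derive1n j (fun x => - F x) = fun x => - derive1n j F x.
Proof.
elim: j => [|j IH] //=.
by rewrite IH derive1_opp.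
Qed.

Lemma derive1n_sign j e (F : R -> R) :
  derive1n j (fun x => (-1)^+e * F x) = fun x => (-1)^+e * derive1n j F x.
Proof.
elim: e => [|e IH].
  have -> : (fun x => (-1)^+0 * F x) = F by apply/funext => x; rewrite expr0 mul1r.
  by apply/funext => x; rewrite expr0 mul1r.
have -> : (fun x => (-1)^+e.+1 * F x) = (fun x => - ((-1)^+e * F x)).
  by apply/funext => x; rewrite exprS mulN1r mulNr.
rewrite derive1n_opp IH; apply/funext => x; by rewrite exprS mulN1r mulNr.
Qed.

Lemma derive1n_neg j (F : R -> R) :
  derive1n j (fun x => F (- x)) = fun x => (-1)^+j * derive1n j F (- x).
Proof.
elim: j => [|j IH].
  by apply/funext => x; rewrite expr0 mul1r.
rewrite [LHS]/= IH.
have := derive1n_sign 1 j (fun x => derive1n j F (- x)); rewrite /= => ->.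
rewrite derive1_neg; apply/funext => x /=; by rewrite exprS mulN1r mulrN mulNr.
Qed.

End Der.

Definition sw (d : seed_label) : seed_label :=
  (d.1, match d.2 with TypeI => TypeII | TypeII => TypeI end).

Section Wr.
Variable R : realType.

Lemma mu_neg (g h : R) d x : mu g h d (- x) = (-1)^+d.1 * mu h g (sw d) x.
Proof.
case: d => v [] /=; rewrite /mu /= jacobi_sym ?opprK; by rewrite mulrCA.
Qed.

Lemma mu_negF (g h : R) d : mu g h d = fun x => (-1)^+d.1 * mu h g (sw d) (- x).
Proof. by apply/funext => x; rewrite -mu_neg opprK. Qed.

Lemma Pn_negF (g h : R) n : Pn g h n = fun x => (-1)^+n * Pn h g n (- x).
Proof. apply/funext => x; by rewrite /Pn jacobi_sym mulrA -expr2 sqrr_sign mul1r. Qed.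

Lemma wronskian_neg M (F G : 'I_M -> R -> R) (s : 'S_M) (e : 'I_M -> nat) eta :
  (forall k, F k = fun x => (-1)^+(e k) * G (s k) (- x)) ->
  wronskian F (- eta) = (-1)^+('C(M,2)) * (-1)^+ s * (\prod_k (-1)^+(e k))
     * wronskian G eta.
Proof.
move=> hF; rewrite /wronskian.
set B := \matrix_(j < M, k < M) derive1n j (G k) eta.
have -> : \matrix_(j < M, k < M) derive1n j (F k) (- eta) =
   diag_mx (\row_(j < M) (-1)^+j) *m (col_perm s B *m diag_mx (\row_(k < M) (-1)^+(e k))).
  apply/matrixP => j k; rewrite mul_diag_mx mul_mx_diag [LHS]mxE [RHS]mxE mxE mxE mxE /B mxE mxE hF derive1n_sign derive1n_neg opprK.
  by rewrite mulrCA; congr (_ * _); exact: mulrC.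
rewrite det_mulmx det_mulmx det_diag det_diag col_permE det_mulmx det_perm odd_permV.
have -> : \prod_(i < M) (\row_(j < M) (-1)^+j : 'rV[R]_M) 0 i = (-1)^+('C(M,2)).
  rewrite (eq_bigr (fun i : 'I_M => (-1)^+ (nat_of_ord i))); last by move=> i _; rewrite mxE.
  by rewrite prodrXr -bin2_sum big_mkord.
have -> : \prod_(i < M) (\row_(k < M) (-1)^+(e k) : 'rV[R]_M) 0 i = \prod_k (-1)^+(e k).
  by apply: eq_bigr => i _; rewrite mxE.
move: (\det B) ((-1) ^+ s : R) (\prod_k (-1)^+(e k) : R) ((-1)^+('C(M,2)) : R) => X Y Z W.
ring.
Qed.

End Wr.

Lemma odd_perm_invol (T : finType) (s : {perm T}) : (forall x, s (s x) = x) ->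
  odd_perm s = odd (#|[pred x | s x != x]| ./2).
Proof.
have [n] := ubnP #|[pred x | s x != x]|; elim: n s => // n IH s /ltnSE le_s_n sK.
case: (pickP (fun x => s x != x)) => [x sx | s_id]; last first.
  have -> : s = 1%g by apply/permP => x; apply/eqP; rewrite perm1; have := s_id x; move/negbFE.
  rewrite odd_perm1 eq_card0 //= => x; rewrite !inE perm1 eqxx.
  by [].
set y := s x.
have xy : x != y by rewrite eq_sym.
set t := (tperm x y * s)%g.
have tE : forall z, t z = s (tperm x y z) by move=> z; rewrite permM.
have sy : s y = x by rewrite /y sK.
have tx : t x = x by rewrite tE tpermL sy.
have ty : t y = y by rewrite tE tpermR.
have tz : forall z, z != x -> z != y -> t z = s z.
  by move=> z zx zy; rewrite tE tpermD // eq_sym.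
have szx : forall z, z != x -> z != y -> s z != x.
  move=> z zx zy; apply/eqP => h; move/eqP: zy; apply; by rewrite /y -h sK.
have szy : forall z, z != x -> z != y -> s z != y.
  move=> z zx zy; apply/eqP => h; move/eqP: zx; apply.
  by rewrite -(sK z) h sy.
have tK : forall z, t (t z) = z.
  move=> z; case: (eqVneq z x) => [->|zx]; first by rewrite !tx.
  case: (eqVneq z y) => [->|zy]; first by rewrite !ty.
  by rewrite (tz z) // tz ?sK // ?szx ?szy.
have card_st : #|[pred z | s z != z]| = (#|[pred z | t z != z]|).+2.
  rewrite (cardD1 x) (cardD1 y) !inE sx /= sy xy.
  rewrite add1n add1n; congr (_.+2); apply: eq_card => z; rewrite !inE.
  case: (eqVneq z x) => [->|zx]; first by rewrite tx eqxx /= andbF.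
  case: (eqVneq z y) => [->|zy]; first by rewrite ty eqxx.
  by rewrite tz.
have ht : odd_perm t = odd (#|[pred x | t x != x]| ./2).
  apply: IH tK; apply: leq_trans _ le_s_n; rewrite card_st; exact: leqnSn.
have hst : s = (tperm x y * t)%g by rewrite /t mulgA tperm2 mul1g.
rewrite {1}hst odd_mul_tperm xy ht card_st /=.
by case: (odd _).
Qed.

Local Close Scope classical_set_scope.
Notation x0 := (0%N, TypeI).

Lemma sw_sw d : sw (sw d) = d. Proof. by case: d => v []. Qed.
Lemma sw_neq d : sw d != d. Proof. by case: d => v []; apply/eqP; case. Qed.
Lemma sw_inj : injective sw. Proof. exact: (can_inj sw_sw). Qed.

Section Sig.
Variables (D : seq seed_label) (N : nat).
Hypotheses (hD : uniq D) (hm : forall d, d \in D -> sw d \in D) (hDN : (size D <= N)%N).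

Definition sigf (k : 'I_N) : 'I_N :=
  if (k < size D)%N then insubd k (index (sw (nth x0 D k)) D) else k.

Lemma sigf_lt (k : 'I_N) : (k < size D)%N ->
  (sigf k < size D)%N /\ nth x0 D (sigf k) = sw (nth x0 D k).
Proof.
move=> hk.
have hin : sw (nth x0 D k) \in D by apply: hm; rewrite mem_nth.
have hi : (index (sw (nth x0 D k)) D < size D)%N by rewrite index_mem.
have -> : val (sigf k) = index (sw (nth x0 D k)) D.
  by rewrite /sigf hk val_insubd (leq_trans hi hDN).
by split => //; rewrite nth_index.
Qed.

Lemma sigf_ge (k : 'I_N) : ~~ (k < size D)%N -> sigf k = k.
Proof. by rewrite /sigf => /negbTE ->. Qed.

Lemma sigfK : cancel sigf sigf.
Proof.
move=> k; case: (ltnP k (size D)) => hk.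
  have [h1 h2] := sigf_lt _ hk.
  have [h3 h4] := sigf_lt _ h1.
  by apply/val_inj/eqP; rewrite -(nth_uniq x0 h3 hk hD) h4 h2 sw_sw.
by rewrite !sigf_ge // -leqNgt.
Qed.

Definition sig : 'S_N := perm (can_inj sigfK).

Lemma sig_lt (k : 'I_N) : (k < size D)%N ->
  (sig k < size D)%N /\ nth x0 D (sig k) = sw (nth x0 D k).
Proof. rewrite /sig permE; exact: sigf_lt. Qed.

Lemma sig_ge (k : 'I_N) : ~~ (k < size D)%N -> sig k = k.
Proof. rewrite /sig permE; exact: sigf_ge. Qed.

Lemma sig_odd : odd_perm sig = odd ((size D)./2).
Proof.
rewrite odd_perm_invol; last by move=> x; rewrite /sig !permE sigfK.
congr (odd (_ ./2)).
have -> : #|[pred x | sig x != x]| = #|[pred x : 'I_N | (x < size D)%N]|.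
  apply: eq_card => x; rewrite !inE.
  case: (ltnP x (size D)) => hx.
    have [_ h] := sig_lt _ hx; apply/negP => /eqP hxx.
    by move: (sw_neq (nth x0 D x)); rewrite -h hxx eqxx.
  by rewrite sig_ge ?eqxx // -leqNgt.
have winj : injective (fun i : 'I_(size D) => widen_ord hDN i).
  by move=> a b /(congr1 val) /= /val_inj.
rewrite -[RHS](card_ord (size D)) -(card_imset _ winj); apply: eq_card => x.
rewrite !inE; apply/idP/imsetP => [hx|[i _ ->]] /=; last exact: ltn_ord.
by exists (Ordinal hx) => //; apply: val_inj.
Qed.

End Sig.

Section DFacts.
Variable D : seq seed_label.
Hypotheses (hD : uniq D) (hm : forall d, d \in D -> sw d \in D).

Lemma perm_sw : perm_eq D (map sw D).
Proof.
apply: uniq_perm => //; first by rewrite (map_inj_uniq sw_inj).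
move=> d; rewrite -{2}(sw_sw d) (mem_map sw_inj).
apply/idP/idP; first exact: hm.
by move/hm; rewrite sw_sw.
Qed.

Lemma MI_MII : M_I D = M_II D.
Proof.
rewrite /M_I /M_II; move/seq.permP: perm_sw => ->.
by rewrite count_map; apply: eq_count => -[v []].
Qed.

Lemma size_MI : size D = (M_I D).*2.
Proof.
rewrite -addnn {2}MI_MII /M_I /M_II -(count_predC (fun d : seed_label => d.2 == TypeI)).
by congr addn; apply: eq_count => -[v []].
Qed.

Lemma prod_sign_D (R : realType) : \prod_(k < size D) (-1)^+(nth x0 D k).1 = 1 :> R.
Proof.
rewrite -(big_mkord xpredT (fun k => (-1)^+(nth x0 D k).1)).
rewrite -(big_nth x0 xpredT (fun d : seed_label => (-1)^+d.1)).
rewrite (bigID (fun d : seed_label => d.2 == TypeI)) /=.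
rewrite [X in _ * X](perm_big _ perm_sw) big_map /=.
rewrite [X in _ * X](eq_bigl (fun d : seed_label => d.2 == TypeI)); last by case=> v [].
rewrite -big_split big1 // => d _.
by rewrite /= -expr2 sqrr_sign.
Qed.

End DFacts.

Lemma odd_bin2_even p : odd 'C(p.*2, 2) = odd p.
Proof.
rewrite bin2 -doubleMl half_double oddM.
by case: p => //= p; rewrite odd_double andbT.
Qed.

Lemma odd_bin2_odd p : odd 'C((p.*2).+1, 2) = odd p.
Proof.
by rewrite bin2 /= -doubleMr half_double oddM /= odd_double.
Qed.

Lemma sign_sq (R : realType) (b : bool) : (-1)^+b * (-1)^+b = 1 :> R.
Proof. by rewrite -expr2 sqrr_sign. Qed.

Theorem mainTheorem7 (R : realType) (g h : R) (D : seq (seed_label))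
  (hg : 2^-1 < g) (hh : 2^-1 < h)
  (hdist : uniq D)
  (hvalid : forall d, d \in D -> valid_seed g h d /\ valid_seed h g d)
  (hmirror : forall v : nat, ((v, TypeI) \in D) = ((v, TypeII) \in D)) :
  forall (n : nat) (eta : R), -1 < eta < 1 ->
    PD D n g h (- eta) = (-1) ^+ n * PD D n h g eta /\
    Xi D g h (- eta) = Xi D h g eta.
Proof.
move=> n eta _.
have hm : forall d, d \in D -> sw d \in D.
  by case=> v [] /=; rewrite hmirror.
have hMI := MI_MII D hdist hm.
have hsz := size_MI D hdist hm.
have hprod := prod_sign_D D hdist hm R.
split.
- rewrite /PD.
  have hDN : (size D <= (size D).+1)%N by apply: leqnSn.
  rewrite (@wronskian_neg R (size D).+1 _
     (fun k : 'I_(size D).+1 => if (k < size D)%N then mu h g (nth x0 D k) else Pn h g n)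
     (sig D _ hdist hm hDN)
     (fun k : 'I_(size D).+1 => if (k < size D)%N then (nth x0 D k).1 else n)); last first.
    move=> k; case: ifP => hk.
      have [hs hn] := sig_lt D _ hdist hm hDN _ hk.
      rewrite hs hn; exact: mu_negF.
    rewrite sig_ge ?hk //; exact: Pn_negF.
  rewrite big_ord_recr /= ltnn.
  rewrite (eq_bigr (fun k : 'I_(size D) => (-1)^+(nth x0 D k).1)); last first.
    by move=> k _ /=; rewrite ltn_ord.
  rewrite hprod mul1r.
  rewrite -signr_odd sig_odd hsz half_double odd_bin2_odd.
  rewrite !opprK hMI.
  move: (wronskian _ _) => W.
  rewrite sign_sq mul1r.
  by rewrite -!mulrA; congr (_ * (_ * _)); exact: mulrC.
- rewrite /Xi.
  have hDN : (size D <= size D)%N by apply: leqnn.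
  rewrite (@wronskian_neg R (size D) _
     (fun k : 'I_(size D) => mu h g (nth x0 D k))
     (sig D _ hdist hm hDN)
     (fun k : 'I_(size D) => (nth x0 D k).1)); last first.
    move=> k; have [_ hn] := sig_lt D _ hdist hm hDN _ (ltn_ord k).
    rewrite hn; exact: mu_negF.
  rewrite hprod mulr1.
  rewrite -signr_odd sig_odd hsz half_double odd_bin2_even.
  rewrite !opprK hMI.
  move: (wronskian _ _) => W.
  rewrite sign_sq mul1r.
  by rewrite -!mulrA; congr (_ * _); exact: mulrC.
Qed.
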